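(* There is an absolute constant $c>0$ such that for all $p\in(0,0.1)$, $$\mathbb{P}_p(E)\le \exp\big[-c\,q^{-1}(\log q^{-1})^2\big].$$
   Context: Let $q=-\log(1-p)$, $A=\lceil 1/\sqrt q\rceil$, $B=\lfloor q^{-1}\log q^{-1}\rfloor$. Under $\mathbb{P}_p$, the initial configuration assigns independent states to sites of $\mathbb{Z}^2$: the origin is active with probability $p$, else empty; every other site is occupied with probability $p$, else empty. A rectangle is $\{a,\dots,c\}\times\{b,\dots,d\}\subset\mathbb{Z}^2$ with dimensions $(c-a+1,d-b+1)$; columns are $\{x\}\times\{b,\dots,d\}$, rows $\{a,\dots,c\}\times\{y\}$. A rectangle has a double gap in the columns (resp. rows) if two consecutive columns (resp. rows) consist entirely of initially empty sites; $G(R)$ is the event that $R$ has no double gap in the columns or rows. $E$ is the union of $G(R)$ over all rectangles $R$ containing the origin with one dimension in $[B-A-10,B-A]$ and the other in $[1,A]$. *)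

(* Defs.v *)
From mathcomp Require Import all_boot all_algebra.
From mathcomp Require Import Rstruct.
From Stdlib Require Import Reals ZArith Classical ClassicalDescription.

Set Implicit Arguments.
Unset Strict Implicit.
Unset Printing Implicit Defensive.

Local Open Scope R_scope.

Definition qof (p : R) : R := - ln (1 - p).

(* floor and ceiling of a real, as integers.  Stdlib's [up x] is the unique
   integer with x < up x <= x + 1, so [up x - 1] is the floor of x. *)
Definition Zfloor (x : R) : Z := Z.sub (up x) Z.one.
Definition Zceil (x : R) : Z := Z.opp (Zfloor (- x)).

Definition Aof (p : R) : Z := Zceil (/ sqrt (qof p)).
Definition Bof (p : R) : Z := Zfloor (/ qof p * ln (/ qof p)).

Local Close Scope R_scope.
Local Open Scope Z_scope.

(* A configuration is described by the set [occ] of initially NON-empty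
   sites (occupied, or active for the origin).  Only emptiness matters. *)
Definition col_empty (occ : Z * Z -> Prop) (x b d : Z) : Prop :=
  forall y : Z, b <= y <= d -> ~ occ (x, y).
Definition row_empty (occ : Z * Z -> Prop) (y a c : Z) : Prop :=
  forall x : Z, a <= x <= c -> ~ occ (x, y).

Definition no_double_gap (occ : Z * Z -> Prop) (a b c d : Z) : Prop :=
  ~ (exists x : Z, a <= x < c /\ col_empty occ x b d /\ col_empty occ (x + 1) b d)
  /\ ~ (exists y : Z, b <= y < d /\ row_empty occ y a c /\ row_empty occ (y + 1) a c).

Definition event_E (A B : Z) (occ : Z * Z -> Prop) : Prop :=
  exists a b c d : Z,
    a <= 0 <= c /\ b <= 0 <= d /\
    ((B - A - 10 <= c - a + 1 <= B - A /\ 1 <= d - b + 1 <= A) \/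
     (1 <= c - a + 1 <= A /\ B - A - 10 <= d - b + 1 <= B - A)) /\
    no_double_gap occ a b c d.

Definition site (N : nat) := ('I_(N.*2.+1) * 'I_(N.*2.+1))%type.
Definition coord (N : nat) (s : site N) : Z * Z :=
  (Z.of_nat (nat_of_ord s.1) - Z.of_nat N, Z.of_nat (nat_of_ord s.2) - Z.of_nat N).

(* Set of non-empty sites of a box configuration (sites outside the box are
   irrelevant for the events considered and are treated as empty). *)
Definition occ_of (N : nat) (w : {ffun site N -> bool}) (z : Z * Z) : Prop :=
  exists s : site N, w s = true /\ coord s = z.

Local Close Scope Z_scope.
Local Open Scope ring_scope.

Definition prob_box (N : nat) (p : R) (Ev : (Z * Z -> Prop) -> Prop) : R :=
  \sum_(w : {ffun site N -> bool})
     (if excluded_middle_informative (Ev (occ_of w))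
      then \prod_(s : site N) (if w s then p else 1 - p)
      else 0).

(* Every rectangle in the definition of E lies in {-N..N}^2 for this N. *)
Definition boxN (p : R) : nat := Z.to_nat (Z.add (Z.abs (Aof p)) (Z.abs (Bof p))).

Definition PE (p : R) : R := prob_box (boxN p) p (event_E (Aof p) (Bof p)).

(* Main.v *)
Require Import Defs.
From mathcomp Require Import all_boot all_algebra.
From mathcomp Require Import Rstruct.
From Stdlib Require Import Reals ZArith Lia Lra Classical ClassicalDescription.
From mathcomp Require Import zify.
From mathcomp Require Import order.
Set Implicit Arguments. Unset Strict Implicit. Unset Printing Implicit Defensive.
Import Order.TTheory GRing.Theory Num.Theory.
Local Open Scope ring_scope.

Lemma sum_prod (S : finType) (g : S -> bool -> R) :
  \sum_(w : {ffun S -> bool}) \prod_(s : S) g s (w s) = \prod_(s : S) (g s true + g s false).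
Proof.
rewrite -bigA_distr_bigA; apply: eq_bigr => s _.
by rewrite big_bool.
Qed.

Section Prob.
Variable S : finType.
Variable p : R.
Hypothesis p0 : 0 <= p.
Hypothesis p1 : p <= 1.

Definition wt (w : {ffun S -> bool}) : R := \prod_(s : S) (if w s then p else 1 - p).

Lemma wt_ge0 w : 0 <= wt w.
Proof. apply: prodr_ge0 => s _; case: (w s) => //=; by rewrite subr_ge0. Qed.

Lemma sum_wt : \sum_w wt w = 1.
Proof.
rewrite /wt (sum_prod (fun s b => if b then p else 1 - p)); apply: big1 => s _ /=; by rewrite addrC subrK.
Qed.

Definition Pr (P : {ffun S -> bool} -> Prop) : R :=
  \sum_w (if excluded_middle_informative (P w) then wt w else 0).

Lemma Pr_ge0 P : 0 <= Pr P.
Proof. apply: sumr_ge0 => w _; case: excluded_middle_informative => ? //; exact: wt_ge0. Qed.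

Lemma Pr_mono (P Q : {ffun S -> bool} -> Prop) :
  (forall w, P w -> Q w) -> Pr P <= Pr Q.
Proof.
move=> PQ; apply: ler_sum => w _.
case: excluded_middle_informative => HP; case: excluded_middle_informative => HQ //.
- by case: HQ; apply: PQ.
- exact: wt_ge0.
Qed.

Lemma Pr_union (J : finType) (P : {ffun S -> bool} -> Prop) (Q : J -> {ffun S -> bool} -> Prop) :
  (forall w, P w -> exists j, Q j w) -> Pr P <= \sum_j Pr (Q j).
Proof.
move=> PQ; rewrite /Pr exchange_big /=; apply: ler_sum => w _.
case: excluded_middle_informative => HP; last first.
  apply: sumr_ge0 => j _; case: excluded_middle_informative => ? //; exact: wt_ge0.
have [j Hj] := PQ w HP.
rewrite (bigD1 j) //=; case: excluded_middle_informative => // ?.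
rewrite lerDl; apply: sumr_ge0 => i _; case: excluded_middle_informative => ? //; exact: wt_ge0.
Qed.

Lemma Pr_empty (P : {ffun S -> bool} -> Prop) :
  ~ P [ffun => false] -> Pr P <= 1 - (1 - p) ^+ #|S|.
Proof.
move=> H0.
have E1 : 1 - (1 - p) ^+ #|S| = \sum_(w | w != [ffun => false]) wt w.
  have -> : (1 - p) ^+ #|S| = wt [ffun => false].
    by rewrite /wt -prodr_const; apply: eq_bigr => s _; rewrite ffunE.
  by rewrite -sum_wt (bigD1 [ffun => false]) //= addrC addrK.
rewrite E1 /Pr (bigD1 [ffun => false]) //=.
case: excluded_middle_informative => // ?.
rewrite add0r; apply: ler_sum => w _.
case: excluded_middle_informative => ? //; exact: wt_ge0.
Qed.

End Prob.
Section Chernoff.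
Variable N : nat.
Variable f : Z * Z -> Z * Z.
Hypothesis f_inj : injective f.
Variables (a0 b0 : Z) (m W : nat).

Definition fc (s : site N) := f (Defs.coord s).

Definition pairb (k : Z) (s : site N) : bool :=
  [&& (a0 + 2 * k <=? (fc s).1)%Z, ((fc s).1 <=? a0 + 2 * k + 1)%Z,
      (b0 <=? (fc s).2)%Z & ((fc s).2 <=? b0 + Z.of_nat W - 1)%Z].

Definition inU (s : site N) : bool :=
  [&& (a0 <=? (fc s).1)%Z, ((fc s).1 <=? a0 + 2 * Z.of_nat m - 1)%Z,
      (b0 <=? (fc s).2)%Z & ((fc s).2 <=? b0 + Z.of_nat W - 1)%Z].

Definition Cond (w : {ffun site N -> bool}) : Prop :=
  forall k : nat, (k < m)%nat -> exists s, w s && pairb (Z.of_nat k) s.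

Lemma coord_inj : injective (@Defs.coord N).
Proof.
move=> [i j] [i' j'] /= [] h1 h2.
have e1 : nat_of_ord i = nat_of_ord i' by lia.
have e2 : nat_of_ord j = nat_of_ord j' by lia.
by congr pair; apply: val_inj.
Qed.

Lemma fc_inj : injective fc.
Proof. by move=> s s' /f_inj /coord_inj. Qed.

Lemma stepA w : Cond w -> (m <= #|[set s | inU s && w s]|)%nat.
Proof.
move=> C.
pose s0 : site N := (ord0, ord0).
pose sel (k : 'I_m) := odflt s0 [pick s | w s && pairb (Z.of_nat k) s].
have selP (k : 'I_m) : w (sel k) && pairb (Z.of_nat k) (sel k).
  rewrite /sel; case: pickP => [s //|H].
  have [s Hs] := C k (ltn_ord k); by rewrite H in Hs.
have sel_inj : injective sel.
  move=> k k' e; apply: val_inj => /=.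
  have := selP k; have := selP k'; rewrite -e.
  case/andP => _ /and4P [h1 h2 _ _] /andP [_ /and4P [h3 h4 _ _]].
  lia.
rewrite -{1}(card_ord m) -(card_imset _ sel_inj).
apply: subset_leq_card; apply/subsetP => s /imsetP [k _ ->].
rewrite inE; have := selP k; case/andP => -> /and4P [h1 h2 h3 h4].
rewrite andbT; apply/and4P; split => //; have := ltn_ord k; unfold is_true in *; lia.
Qed.

Lemma stepD : (#|[set s | inU s]| <= (2 * m).+1 * W.+1)%nat.
Proof.
pose phi (s : site N) : 'I_(2 * m).+1 * 'I_W.+1 :=
  (inord (Z.to_nat ((fc s).1 - a0)), inord (Z.to_nat ((fc s).2 - b0))).
have -> : ((2 * m).+1 * W.+1 = #|{: 'I_(2 * m).+1 * 'I_W.+1}|)%nat by rewrite card_prod !card_ord.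
apply: (@leq_card_in _ _ phi) => s s'; rewrite !inE => /and4P [h1 h2 h3 h4] /and4P [h1' h2' h3' h4'].
rewrite /phi => [[e1 e2]].
move: e1 e2 => /(congr1 val) /= e1 /(congr1 val) /= e2.
rewrite !inordK in e1 e2; try lia.
apply: fc_inj; move: (fc s) (fc s') h1 h2 h3 h4 h1' h2' h3' h4' e1 e2 => [x y] [x' y'] /= *.
congr pair; lia.
Qed.

Lemma chernoff (p t : R) : 0 <= p -> p <= 1 -> 1 <= t ->
  Pr p Cond * t ^+ m <= (1 + p * (t - 1)) ^+ ((2 * m).+1 * W.+1).
Proof.
move=> p0 p1 t1.
have t0 : 0 <= t by apply: le_trans t1.
pose G (s : site N) (b : bool) := (if b then p else 1 - p) * (if inU s && b then t else 1).
apply: (@le_trans _ _ (\sum_(w : {ffun site N -> bool}) \prod_(s : site N) G s (w s))).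
  rewrite /Pr mulr_suml; apply: ler_sum => w _.
  have -> : \prod_(s : site N) G s (w s) = wt p w * t ^+ #|[set s | inU s && w s]|.
    rewrite /G big_split /=; congr (_ * _).
    rewrite -big_mkcond /= prodr_const; congr (_ ^+ _).
    by apply: eq_card => s; rewrite inE.
  case: excluded_middle_informative => HC.
    apply: ler_wpM2l; first exact: wt_ge0.
    by apply: ler_weXn2l => //; apply: stepA.
  rewrite mul0r; apply: mulr_ge0; first exact: wt_ge0.
  exact: exprn_ge0.
rewrite (sum_prod G).
have -> : \prod_(s : site N) (G s true + G s false) =
          \prod_(s in [set s | inU s]) (1 + p * (t - 1)).
  rewrite [RHS]big_mkcond /=; apply: eq_bigr => s _; rewrite /G inE andbT andbF mulr1.
  case: (inU s); first by rewrite mulrBr mulr1 addrCA.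
  by rewrite mulr1 addrC subrK.
rewrite prodr_const; apply: ler_weXn2l; last exact: stepD.
rewrite lerDl; apply: mulr_ge0 => //; by rewrite subr_ge0.
Qed.

End Chernoff.

Definition zswap (z : Z * Z) : Z * Z := (z.2, z.1).
Lemma zswap_inj : injective zswap.
Proof. by move=> [x y] [x' y'] [-> ->]. Qed.

Lemma not_col_empty occ x b d :
  ~ col_empty occ x b d -> exists y, (b <= y <= d)%Z /\ occ (x, y).
Proof.
move=> H; apply: NNPP => H'; apply: H => y hy ho; apply: H'; by exists y.
Qed.

Lemma not_row_empty occ y a c :
  ~ row_empty occ y a c -> exists x, (a <= x <= c)%Z /\ occ (x, y).
Proof.
move=> H; apply: NNPP => H'; apply: H => x hx ho; apply: H'; by exists x.
Qed.

Lemma cond_col N (w : {ffun site N -> bool}) a b c d (m : nat) :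
  (2 * Z.of_nat m <= c - a + 1)%Z -> (b <= d)%Z ->
  no_double_gap (occ_of w) a b c d ->
  Cond (fun z : Z * Z => z) a b m (Z.to_nat (d - b + 1)) w.
Proof.
move=> hm hbd [H1 _] k hk.
have hk' : (Z.of_nat k < Z.of_nat m)%Z by lia.
have nc : ~ (col_empty (occ_of w) (a + 2 * Z.of_nat k) b d /\
             col_empty (occ_of w) (a + 2 * Z.of_nat k + 1) b d).
  move=> [e1 e2]; apply: H1; exists (a + 2 * Z.of_nat k)%Z; split => //; lia.
have [nc1|nc2] : ~ col_empty (occ_of w) (a + 2 * Z.of_nat k) b d \/
                 ~ col_empty (occ_of w) (a + 2 * Z.of_nat k + 1) b d.
  by apply: NNPP => h; apply: nc; split; apply: NNPP => h'; apply: h; [left|right].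
- have [y [hy [s [ws cs]]]] := not_col_empty nc1.
  exists s; rewrite ws /pairb /fc cs /=.
  apply/and4P; split; apply/Z.leb_le; lia.
- have [y [hy [s [ws cs]]]] := not_col_empty nc2.
  exists s; rewrite ws /pairb /fc cs /=.
  apply/and4P; split; apply/Z.leb_le; lia.
Qed.

Lemma cond_row N (w : {ffun site N -> bool}) a b c d (m : nat) :
  (2 * Z.of_nat m <= d - b + 1)%Z -> (a <= c)%Z ->
  no_double_gap (occ_of w) a b c d ->
  Cond zswap b a m (Z.to_nat (c - a + 1)) w.
Proof.
move=> hm hac [_ H1] k hk.
have hk' : (Z.of_nat k < Z.of_nat m)%Z by lia.
have nc : ~ (row_empty (occ_of w) (b + 2 * Z.of_nat k) a c /\
             row_empty (occ_of w) (b + 2 * Z.of_nat k + 1) a c).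
  move=> [e1 e2]; apply: H1; exists (b + 2 * Z.of_nat k)%Z; split => //; lia.
have [nc1|nc2] : ~ row_empty (occ_of w) (b + 2 * Z.of_nat k) a c \/
                 ~ row_empty (occ_of w) (b + 2 * Z.of_nat k + 1) a c.
  by apply: NNPP => h; apply: nc; split; apply: NNPP => h'; apply: h; [left|right].
- have [x [hx [s [ws cs]]]] := not_row_empty nc1.
  exists s; rewrite ws /pairb /fc cs /=.
  apply/and4P; split; apply/Z.leb_le; lia.
- have [x [hx [s [ws cs]]]] := not_row_empty nc2.
  exists s; rewrite ws /pairb /fc cs /=.
  apply/and4P; split; apply/Z.leb_le; lia.
Qed.

Section Union.
Variables (A B : Z) (N m0 : nat).
Hypothesis hN : Z.of_nat N = (Z.abs A + Z.abs B)%Z.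
Hypothesis hm0 : (2 * Z.of_nat m0 <= B - A - 10)%Z.

Definition zc (i : 'I_(N.*2.+1)) : Z := (Z.of_nat i - Z.of_nat N)%Z.
Definition J := ('I_(N.*2.+1) * 'I_(N.*2.+1) * 'I_(N.*2.+1) * 'I_(N.*2.+1) * bool)%type.

Definition Qj (j : J) (w : {ffun site N -> bool}) : Prop :=
  let: (i1, i2, i3, i4, o) := j in
  let a := zc i1 in let b := zc i2 in let c := zc i3 in let d := zc i4 in
  if o then (1 <= d - b + 1 <= A)%Z /\ Cond (fun z : Z * Z => z) a b m0 (Z.to_nat (d - b + 1)) w
  else (1 <= c - a + 1 <= A)%Z /\ Cond zswap b a m0 (Z.to_nat (c - a + 1)) w.

Lemma zc_surj (x : Z) : (- Z.of_nat N <= x <= Z.of_nat N)%Z -> exists i, zc i = x.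
Proof.
move=> hx.
have hi : (Z.to_nat (x + Z.of_nat N) < N.*2.+1)%nat by rewrite -addnn; lia.
exists (Ordinal hi); rewrite /zc /=; lia.
Qed.

Lemma E_cover w : event_E A B (occ_of w) -> exists j, Qj j w.
Proof.
move=> [a [b [c [d [ha [hb [hdim G]]]]]]].
have [i1 e1] : exists i, zc i = a by apply: zc_surj; lia.
have [i2 e2] : exists i, zc i = b by apply: zc_surj; lia.
have [i3 e3] : exists i, zc i = c by apply: zc_surj; lia.
have [i4 e4] : exists i, zc i = d by apply: zc_surj; lia.
case: hdim => [[hL hW]|[hW hL]].
- exists (i1, i2, i3, i4, true); rewrite /= ?e1 ?e2 ?e3 ?e4; split; first lia.
  apply: (cond_col (c := c)) => //; lia.
- exists (i1, i2, i3, i4, false); rewrite /= ?e1 ?e2 ?e3 ?e4; split; first lia.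
  apply: (cond_row (d := d)) => //; lia.
Qed.

Lemma Pr_False (p : R) : Pr p (fun _ : {ffun site N -> bool} => False) = 0.
Proof. by apply: big1 => w _; case: excluded_middle_informative. Qed.

Variables (p t : R).
Hypotheses (p0 : 0 <= p) (p1 : p <= 1) (t1 : 1 <= t).

Definition Bd : R := (1 + p * (t - 1)) ^+ ((2 * m0).+1 * (Z.to_nat A).+1) / t ^+ m0.

Lemma Bd_ge0 : 0 <= Bd.
Proof.
have t0 : 0 <= t by apply: le_trans t1.
apply: divr_ge0; apply: exprn_ge0 => //.
apply: addr_ge0 => //; apply: mulr_ge0 => //; by rewrite subr_ge0.
Qed.

Lemma Pr_Qj j : Pr p (Qj j) <= Bd.
Proof.
have t0 : 0 < t by apply: lt_le_trans t1.
have tm0 : 0 < t ^+ m0 by apply: exprn_gt0.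
have base1 : 1 <= 1 + p * (t - 1).
  rewrite lerDl; apply: mulr_ge0 => //; by rewrite subr_ge0.
have key : forall f (a0 b0 : Z) (W : nat), injective f -> (W <= Z.to_nat A)%nat ->
   Pr p (@Cond N f a0 b0 m0 W) <= Bd.
  move=> f a0 b0 W fi hW.
  rewrite /Bd ler_pdivlMr //.
  apply: le_trans (chernoff N fi a0 b0 m0 W p0 p1 t1) _.
  apply: ler_weXn2l => //; apply: leq_mul => //.
case: j => [[[[i1 i2] i3] i4] o]; rewrite /Qj.
set a := zc i1; set b := zc i2; set c := zc i3; set d := zc i4.
case: o.
- case: (classic (1 <= d - b + 1 <= A)%Z) => h.
  + have hW : (Z.to_nat (d - b + 1) <= Z.to_nat A)%nat by lia.
    apply: le_trans (key (fun z => z) a b _ (fun x y e => e) hW).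
    by apply: (Pr_mono p0 p1) => w [].
  + apply: le_trans _ Bd_ge0; rewrite -(Pr_False p); apply: (Pr_mono p0 p1) => w [] //.
- case: (classic (1 <= c - a + 1 <= A)%Z) => h.
  + have hW : (Z.to_nat (c - a + 1) <= Z.to_nat A)%nat by lia.
    apply: le_trans (key zswap b a _ zswap_inj hW).
    by apply: (Pr_mono p0 p1) => w [].
  + apply: le_trans _ Bd_ge0; rewrite -(Pr_False p); apply: (Pr_mono p0 p1) => w [] //.
Qed.

Lemma PE_union : Pr p (fun w : {ffun site N -> bool} => event_E A B (occ_of w)) <= Bd *+ (N.*2.+1 * N.*2.+1 * N.*2.+1 * N.*2.+1 * 2).
Proof.
apply: le_trans (Pr_union p0 p1 (Q := Qj) E_cover) _.
apply: le_trans (ler_sum _ (fun j _ => Pr_Qj j)) _.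
rewrite sumr_const; apply: ler_wpMn2l; first exact: Bd_ge0.
rewrite /J !card_prod !card_ord card_bool.
done.
Qed.

End Union.

Lemma natmulE (x : R) n : x *+ n = Rmult x (INR n).
Proof. by rewrite INRE RmultE mulr_natr. Qed.

Lemma Bd_conv A m0 p t n : Bd A m0 p t *+ n =
  Rmult (Rdiv (pow (Rplus 1 (Rmult p (Rminus t 1))) ((2 * m0).+1 * (Z.to_nat A).+1)) (pow t m0)) (INR n).
Proof. by rewrite natmulE /Bd !RpowE. Qed.

Lemma card_site N : #|{: site N}| = (N.*2.+1 * N.*2.+1)%nat.
Proof. by rewrite card_prod card_ord. Qed.

Lemma pow_conv (x : R) n : x ^+ n = pow x n.
Proof. by rewrite RpowE. Qed.

Lemma toRle (x y : R) : Rle x y -> x <= y.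
Proof. by move/RleP. Qed.

Local Close Scope ring_scope.
Local Open Scope R_scope.

Lemma ln_le' x y : 0 < x -> x <= y -> ln x <= ln y.
Proof.
move=> hx hxy; case: (Rle_lt_or_eq_dec _ _ hxy) => h.
- left; exact: ln_increasing.
- rewrite h; lra.
Qed.

Lemma q_facts p : 0 < p < 1/10 -> 0 < qof p /\ p <= qof p /\ qof p < 1/9.
Proof.
move=> [hp0 hp1].
have h1 : ln (1 - p) <= - p.
  rewrite -[X in _ <= X]ln_exp; apply: ln_le'; first lra.
  have := exp_ineq1_le (- p); lra.
have h2 : - ln (1 - p) <= p / (1 - p).
  have e : - ln (1 - p) = ln (/ (1 - p)) by rewrite ln_Rinv; lra.
  rewrite e -[X in _ <= X]ln_exp; apply: ln_le'.
    apply: Rinv_0_lt_compat; lra.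
  have := exp_ineq1_le (p / (1 - p)).
  have -> : 1 + p / (1 - p) = / (1 - p).
    have hne : 1 - p <> 0 by lra.
    apply: (Rmult_eq_reg_r (1 - p)) => //.
    rewrite Rmult_plus_distr_r /Rdiv Rmult_assoc Rinv_l //; lra.
  lra.
have h3 : p / (1 - p) < 1 / 9.
  have hne : 1 - p <> 0 by lra.
  apply: (Rmult_lt_reg_r (1 - p)); first lra.
  rewrite /Rdiv Rmult_assoc Rinv_l // Rmult_1_r; lra.
rewrite /qof; lra.
Qed.

Lemma A_bounds p : 0 < qof p ->
  sqrt (/ qof p) <= IZR (Aof p) < sqrt (/ qof p) + 1.
Proof.
move=> hq.
rewrite /Aof /Zceil /Zfloor -sqrt_inv.
set x := sqrt (/ qof p).
have [h1 h2] := archimed (- x).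
rewrite opp_IZR minus_IZR /= /Z.one.
lra.
Qed.

Lemma B_bounds p :
  / qof p * ln (/ qof p) - 1 < IZR (Bof p) <= / qof p * ln (/ qof p).
Proof.
rewrite /Bof /Zfloor.
set y := / qof p * ln (/ qof p).
have [h1 h2] := archimed y.
rewrite minus_IZR /= /Z.one; lra.
Qed.

Lemma exp_le' x y : x <= y -> exp x <= exp y.
Proof.
move=> h; case: (Rle_lt_or_eq_dec _ _ h) => h'.
- left; exact: exp_increasing.
- rewrite h'; lra.
Qed.

Lemma exp_pow' x n : exp x ^ n = exp (INR n * x).
Proof.
elim: n => [|n IH]; first by rewrite /= Rmult_0_l exp_0.
have -> : exp x ^ n.+1 = exp x * exp x ^ n by [].
rewrite IH S_INR -exp_plus; f_equal; ring.
Qed.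

Lemma pow_exp_ln b n : 0 < b -> b ^ n = exp (INR n * ln b).
Proof. by move=> hb; rewrite -Rpower_pow. Qed.

Lemma two_le_e : 2 <= exp 1.
Proof. have := exp_ineq1_le 1; lra. Qed.

Lemma ln2_le1 : ln 2 <= 1.
Proof. rewrite -[X in _ <= X]ln_exp; apply: ln_le'; [lra | exact: two_le_e]. Qed.

Lemma small_core (p u L : R) (A' m0 K : nat) :
  0 < p -> p * u <= 1 -> u = exp L -> 20 <= L ->
  INR A' < sqrt u + 1 -> u * L <= 4 * INR m0 -> INR K <= u ^ 3 ->
  let t := 1 + / ((INR A' + 1) * p) in
  (1 + p * (t - 1)) ^ ((2 * m0).+1 * A'.+1) / t ^ m0 * INR (K * K * K * K * 2)
  <= exp (- (/ 32 * u * L ^ 2)).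
Proof.
move=> hp hpu hu hL hA hm hK t.
have hu21 : 1 + L <= u by rewrite hu; exact: exp_ineq1_le.
have u0 : 0 < u by lra.
set s := sqrt u.
have ss : s * s = u by apply: sqrt_sqrt; lra.
have s0 : 0 <= s by apply: sqrt_pos.
have s2 : 2 <= s by nra.
set a1 := INR A' + 1.
have a0 : 0 <= INR A' by apply: pos_INR.
have a1p : 0 < a1 by rewrite /a1; lra.
have a1s : a1 <= 2 * s by rewrite /a1 -/s in hA *; lra.
have ap : 0 < a1 * p by apply: Rmult_lt_0_compat.
have ht : t = 1 + / (a1 * p) by [].
have e1 : p * (t - 1) = / a1.
  rewrite /t /a1; field; split; [lra | rewrite /a1 in a1p; lra].
rewrite e1.
have h2 : (1 + / a1) ^ ((2 * m0).+1 * A'.+1) <= exp 1 * exp 2 ^ m0.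
  apply: Rle_trans (pow_incr _ (exp (/ a1)) _ _) _.
    split; first by have := Rinv_0_lt_compat _ a1p; lra.
    exact: exp_ineq1_le.
  rewrite !exp_pow'.
  have -> : INR ((2 * m0).+1 * A'.+1) * / a1 = 1 + INR m0 * 2.
    rewrite (mult_INR (2 * m0).+1 A'.+1) !S_INR (mult_INR 2 m0) /a1 /=.
    field; lra.
  rewrite exp_plus; lra.
have tpos : 0 < t by rewrite ht; have := Rinv_0_lt_compat _ ap; lra.
have h3 : / t ^ m0 <= (a1 * p) ^ m0.
  rewrite -pow_inv; apply: pow_incr; split.
    by left; apply: Rinv_0_lt_compat.
  rewrite -[X in _ <= X]Rinv_inv; apply: Rinv_le_contravar.
    by apply: Rinv_0_lt_compat.
  rewrite ht; have := Rinv_0_lt_compat _ ap; lra.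
set beta := exp 2 * (a1 * p).
have bpos : 0 < beta by apply: Rmult_lt_0_compat => //; exact: exp_pos.
have hB : (1 + / a1) ^ ((2 * m0).+1 * A'.+1) / t ^ m0 <= exp 1 * beta ^ m0.
  rewrite /Rdiv /beta Rpow_mult_distr -Rmult_assoc.
  apply: Rmult_le_compat => //.
  - apply: pow_le; have := Rinv_0_lt_compat _ a1p; lra.
  - by left; apply: Rinv_0_lt_compat; apply: pow_lt.
have lns : ln s = L / 2.
  have : ln u = 2 * ln s by rewrite -ss ln_mult; lra.
  rewrite hu ln_exp; lra.
have hbeta : ln beta <= - (L / 4).
  have e2 : 2 <= exp 2 by have := exp_ineq1_le 2; lra.
  have hb1 : beta <= 2 * exp 2 * / s.
    rewrite /beta.
    have sp : 0 < s by lra.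
    have : a1 * p * s <= 2.
      have : p * (s * s) <= 1 by rewrite ss.
      nra.
    move=> h; apply: (Rmult_le_reg_r s) => //.
    rewrite (Rmult_assoc (2 * exp 2)) Rinv_l; last lra.
    rewrite Rmult_1_r; have := exp_pos 2; nra.
  have : ln beta <= ln (2 * exp 2 * / s) by apply: ln_le'.
  rewrite ln_mult; last (apply: Rinv_0_lt_compat; lra); last (have := exp_pos 2; lra).
  rewrite ln_mult; [|lra|exact: exp_pos].
  rewrite ln_exp ln_Rinv; last lra.
  have := ln2_le1; lra.
have hm0 : 0 <= INR m0 by apply: pos_INR.
have hbm : beta ^ m0 <= exp (- (u * L / 4 * (L / 4))).
  rewrite pow_exp_ln //; apply: exp_le'.
  nra.
have hK0 : 0 <= INR K by apply: pos_INR.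
have hKK : INR (K * K * K * K * 2) * exp 1 <= exp (13 * L).
  rewrite !mult_INR.
  have hu3 : u ^ 3 = exp (3 * L) by rewrite hu exp_pow'; simpl; ring_simplify (1+1+1); done.
  rewrite hu3 in hK.
  have -> : 13 * L = 3 * L + 3 * L + 3 * L + 3 * L + L by ring.
  rewrite !exp_plus.
  have e3 : 0 <= exp (3 * L) by have := exp_pos (3 * L); lra.
  have eL : INR 2 * exp 1 <= exp L.
    have : exp 2 <= exp L by apply: exp_le'; lra.
    have -> : exp 2 = exp 1 * exp 1 by rewrite -exp_plus; ring_simplify (1+1).
    have := two_le_e; simpl; nra.
  have h4 : INR K * INR K * INR K * INR K <= exp (3 * L) * exp (3 * L) * exp (3 * L) * exp (3 * L).
    repeat apply: Rmult_le_compat; try nra.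
  have := exp_pos 1; have := exp_pos L; simpl in *; nra.
apply: Rle_trans (Rmult_le_compat_r _ _ _ _ hB) _; first exact: pos_INR.
have := Rmult_le_compat_l (exp 1) _ _ (Rlt_le _ _ (exp_pos 1)) hbm.
move=> hb2.
apply: Rle_trans (Rmult_le_compat_r (INR (K * K * K * K * 2)) _ _ (pos_INR _) hb2) _.
have -> : exp 1 * exp (- (u * L / 4 * (L / 4))) * INR (K * K * K * K * 2)
   = INR (K * K * K * K * 2) * exp 1 * exp (- (u * L / 4 * (L / 4))) by ring.
apply: Rle_trans (Rmult_le_compat_r _ _ _ (Rlt_le _ _ (exp_pos _)) hKK) _.
rewrite -exp_plus; apply: exp_le'.
have hUL : 420 <= u * L by nra.
have : 420 * L <= u * L * L by nra.
simpl; nra.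
Qed.

Definition M0 : R := (2 * (21 * exp 20 + 1) + 1) ^ 2.
Definition delta0 : R := exp (M0 * ln (9 / 10)).
Definition cL : R := delta0 / (400 * exp 20).

Lemma cL_pos : 0 < cL.
Proof.
rewrite /cL /Rdiv; apply: Rmult_lt_0_compat; first exact: exp_pos.
apply: Rinv_0_lt_compat; have := exp_pos 20; lra.
Qed.

Lemma large_core p u L c n : 0 < p < 1/10 -> u = exp L -> 0 <= L < 20 ->
  INR n <= M0 -> 0 < c <= cL -> 1 - (1 - p) ^ n <= exp (- (c * u * L ^ 2)).
Proof.
move=> [hp0 hp1] hu [hL0 hL1] hn [hc0 hc1].
have l9 : ln (9 / 10) < 0.
  rewrite -ln_1; apply: ln_increasing; lra.
have hd : delta0 <= (1 - p) ^ n.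
  apply: Rle_trans (pow_incr (9/10) (1 - p) n _); last lra.
  rewrite pow_exp_ln; last lra.
  apply: exp_le'; have := pos_INR n; nra.
apply: Rle_trans (exp_ineq1_le (- (1 - p) ^ n)) _ .
apply: exp_le'.
have e20 : u < exp 20 by rewrite hu; apply: exp_increasing.
have u0 : 0 < u by rewrite hu; apply: exp_pos.
have hcd : c * (400 * exp 20) <= delta0.
  have E : 0 < 400 * exp 20 by have := exp_pos 20; lra.
  move: hc1; rewrite /cL => hc1.
  have := Rmult_le_compat_r _ _ _ (Rlt_le _ _ E) hc1.
  rewrite /Rdiv Rmult_assoc Rinv_l; lra.
have : u * L ^ 2 <= 400 * exp 20.
  simpl; have : L * (L * 1) <= 400 by nra.
  nra.
nra.
Qed.

Lemma E_empty A B N : (12 <= B - A)%Z ->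
  ~ event_E A B (occ_of (N := N) [ffun => false]).
Proof.
have emp : forall z, ~ occ_of (N := N) [ffun => false] z.
  by move=> z [s []]; rewrite ffunE.
move=> h [a [b [c [d [ha [hb [hdim [G1 G2]]]]]]]].
case: hdim => [[hL hW]|[hW hL]].
- apply: G1; exists a; split; first lia.
  split => y _; exact: emp.
- apply: G2; exists b; split; first lia.
  split => x _; exact: emp.
Qed.

Theorem lemma7 :
  exists c : R, 0 < c /\
    forall p : R, 0 < p < 1 / 10 ->
      PE p <= exp (- (c * / qof p * (ln (/ qof p)) ^ 2)).
Proof.
exists (Rmin (/ 32) cL); split.
  apply: Rmin_pos; [lra | exact: cL_pos].
move=> p hp.
have [hq0 [hpq hq9]] := q_facts hp.
have hA := A_bounds hq0.
have hB := B_bounds p.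
set q := qof p in hq0 hpq hq9 hA hB *.
have u9 : 9 < / q.
  have -> : 9 = / (1 / 9) by field.
  apply: Rinv_lt_contravar => //; nra.
have hpu : p * / q <= 1.
  have -> : 1 = q * / q by field; lra.
  apply: Rmult_le_compat_r => //; left; exact: Rinv_0_lt_compat.
set u := / q in u9 hpu hA hB *.
have hu : u = exp (ln u) by rewrite exp_ln; lra.
set L := ln u in hu hB *.
have L2 : 2 <= L.
  rewrite /L -[2]ln_exp; apply: ln_le'; first exact: exp_pos.
  have -> : 2 = 1 + 1 by ring.
  rewrite exp_plus; have := exp_le_3; have := exp_pos 1; nra.
have hu1L : 1 + L <= u by rewrite [X in _ <= X]hu; exact: exp_ineq1_le.
set s := sqrt u in hA.
have ss : s * s = u by apply: sqrt_sqrt; lra.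
have s0 : 0 <= s by apply: sqrt_pos.
have s3 : 3 <= s by nra.
have su : s <= u by nra.
set A := Aof p in hA *.
set B := Bof p in hB *.
have hA1 : (1 <= A)%Z.
  have : (0 < A)%Z by apply: lt_IZR; lra.
  lia.
have hBA : (12 <= B - A)%Z.
  have : (11 < B - A)%Z.
    apply: lt_IZR; rewrite minus_IZR; nra.
  lia.
have hB0 : (0 <= B)%Z by lia.
have hN : Z.of_nat (boxN p) = (Z.abs A + Z.abs B)%Z.
  by rewrite /boxN Z2Nat.id -/A -/B; lia.
set N := boxN p in hN *.
have hNR : INR N = IZR A + IZR B.
  rewrite INR_IZR_INZ hN Z.abs_eq; last lia.
  by rewrite Z.abs_eq ?plus_IZR //; lia.
have p0r := toRle (Rlt_le _ _ (proj1 hp)).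
have p1r := toRle (ltac:(lra) : p <= 1).
change (PE p) with (Pr p (fun w : {ffun site N -> bool} => event_E A B (occ_of w))).
case: (Rlt_or_le L 20) => hL.
-
  have H := @Pr_empty _ p p0r p1r (fun w : {ffun site N -> bool} => event_E A B (occ_of w)) (@E_empty A B N hBA).
  move/RleP: H; rewrite card_site pow_conv => H.
  apply: Rle_trans H _.
  apply: large_core => //.
  + lra.
  + have e20 : u < exp 20 by rewrite hu; apply: exp_increasing.
    rewrite mult_INR S_INR -addnn plus_INR hNR /M0.
    have hN1 : IZR A + IZR B <= 21 * exp 20 + 1 by nra.
    have hN0 : 0 <= IZR A + IZR B by rewrite -hNR; apply: pos_INR.
    simpl; nra.
  + split; [apply: Rmin_pos; [lra | exact: cL_pos] | exact: Rmin_r].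
-
  set m0 := Z.to_nat ((B - A - 10) / 2).
  have hdm := Z.mul_div_le (B - A - 10) 2 ltac:(lia).
  have hmod := Z.mod_pos_bound (B - A - 10) 2 ltac:(lia).
  have hdiv := Z_div_mod_eq_full (B - A - 10) 2.
  have hm0z : Z.of_nat m0 = ((B - A - 10) / 2)%Z.
    rewrite /m0 Z2Nat.id //; lia.
  have hm0 : (2 * Z.of_nat m0 <= B - A - 10)%Z by lia.
  have hm0' : (B - A - 11 <= 2 * Z.of_nat m0)%Z by lia.
  set t := 1 + / ((INR (Z.to_nat A) + 1) * p).
  have ht1 : 1 <= t.
    have : 0 < (INR (Z.to_nat A) + 1) * p.
      apply: Rmult_lt_0_compat; last lra.
      have := pos_INR (Z.to_nat A); lra.
    move/Rinv_0_lt_compat; rewrite /t; lra.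
  have t1r := toRle ht1.
  have H := PE_union hN hm0 p0r p1r t1r.
  move/RleP: H; rewrite Bd_conv => H.
  apply: Rle_trans H _.
  apply: Rle_trans (small_core (A' := Z.to_nat A) (m0 := m0) (K := N.*2.+1) _ _ _ _ _ _ _) _.
  + lra.
  + exact: hpu.
  + exact: hu.
  + exact: hL.
  + rewrite INR_IZR_INZ Z2Nat.id; last lia.
    rewrite /s in hA; lra.
  + have hm := IZR_le _ _ hm0'.
    rewrite mult_IZR (minus_IZR (B - A)) (minus_IZR B A) in hm.
    rewrite INR_IZR_INZ.
    have h20 : 20 * u <= u * L by nra.
    nra.
  + rewrite S_INR -addnn plus_INR hNR.
    have hLu : u * L <= u * u by nra.
    simpl; nra.
  + apply: exp_le'.
    have hc : Rmin (/ 32) cL <= / 32 by apply: Rmin_l.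
    have h0 : 0 <= u * L ^ 2 by simpl; nra.
    have : Rmin (/ 32) cL * (u * L ^ 2) <= / 32 * (u * L ^ 2) by apply: Rmult_le_compat_r.
    lra.
Qed.
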